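(* Let $G$ be a connected graph of order at least three. If $\gamma(G-v)\ge \gamma(G)$ for every vertex $v$ that belongs to some $\gamma$-set of $G$, then $\gamma(G)=\gamma_{\rm cer}(G)$.
   Context: All graphs are finite and simple; $G-v$ denotes the graph obtained by deleting vertex $v$. A set $D\subseteq V_G$ is a dominating set of $G$ if every vertex of $V_G-D$ has a neighbor in $D$; $\gamma(G)$ is the minimum cardinality of a dominating set, and a $\gamma$-set is a dominating set of cardinality $\gamma(G)$. A set $D\subseteq V_G$ is a certified dominating set of $G$ if $D$ is a dominating set of $G$ and every vertex of $D$ has either zero or at least two neighbors in $V_G-D$; $\gamma_{\rm cer}(G)$ is the minimum cardinality of a certified dominating set of $G$. *)

(* Defs.v *)
(* A simple graph G is given by a finite vertex type T
   with a symmetric irreflexive adjacency relation e. Induced subgraphs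
   (in particular G - v) are handled by restricting to a vertex set V. *)
From mathcomp Require Import all_boot.
Set Implicit Arguments. Unset Strict Implicit. Unset Printing Implicit Defensive.

Section Graphs.
Variable T : finType.
Variable e : rel T.

Definition simple_graph : Prop := symmetric e /\ irreflexive e.

Definition connected_graph : Prop := forall x y : T, connect e x y.

Definition nbhd_in (V : {set T}) (x : T) : {set T} := [set y in V | e x y].

Definition dominating_in (V D : {set T}) : bool :=
  (D \subset V) && [forall x in V :\: D, [exists y in D, e x y]].

(* domination number of G[V]; V itself dominates, so #|V| is an upper bound *)
Definition gamma_in (V : {set T}) : nat :=
  \big[minn/#|V|]_(D : {set T} | dominating_in V D) #|D|.

Definition certified_dominating_in (V D : {set T}) : bool :=
  dominating_in V D &&
  [forall x in D, (#|nbhd_in V x :\: D| == 0) || (2 <= #|nbhd_in V x :\: D|)].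

Definition gamma_cer_in (V : {set T}) : nat :=
  \big[minn/#|V|]_(D : {set T} | certified_dominating_in V D) #|D|.

Definition gamma : nat := gamma_in [set: T].
Definition gamma_cer : nat := gamma_cer_in [set: T].
Definition is_gamma_set (D : {set T}) : bool :=
  dominating_in [set: T] D && (#|D| == gamma).
Definition gamma_del (v : T) : nat := gamma_in [set~ v].

End Graphs.

(* Main.v *)
Require Import Defs.
From mathcomp Require Import all_boot.
From mathcomp Require Import zify.
Set Implicit Arguments.

Section Helpers.
Variables (T : finType) (e : rel T).

Lemma bigmin_le (I : finType) (a : nat) (P : pred I) (F : I -> nat) (D : I) :
  P D -> \big[minn/a]_(i | P i) F i <= F D.
Proof.
move=> PD; rewrite /index_enum; have : D \in Finite.enum I by rewrite -enumT mem_enum.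
elim: (Finite.enum I) => // i r IH; rewrite inE big_cons => /orP[/eqP <-|Dr].
  by rewrite PD geq_minl.
case: (P i); last exact: IH.
by rewrite geq_min IH ?orbT.
Qed.

Lemma gamma_in_le V D : dominating_in e V D -> gamma_in e V <= #|D|.
Proof. by move=> HD; exact: (@bigmin_le _ #|V| (dominating_in e V) (fun D => #|D|) D HD). Qed.

Lemma gamma_in_leV V : gamma_in e V <= #|V|.
Proof.
rewrite /gamma_in; apply: (big_rec (fun n => n <= #|V|)) => // D n _ Hn.
by rewrite geq_min Hn orbT.
Qed.

Lemma gamma_attained V : exists D, dominating_in e V D /\ #|D| = gamma_in e V.
Proof.
have HV : dominating_in e V V.
  by rewrite /dominating_in subxx /=; apply/forall_inP => x; rewrite setDv inE.
rewrite /gamma_in.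
apply: (big_rec (fun n => exists D, dominating_in e V D /\ #|D| = n)).
  by exists V.
move=> D n HD [D' [HD' <-]]; rewrite /minn; case: ltnP => _.
  by exists D. by exists D'.
Qed.

Lemma gamma_le_cer : gamma e <= gamma_cer e.
Proof.
rewrite /gamma_cer /gamma_cer_in.
apply: (big_rec (fun n => gamma e <= n)); first exact: gamma_in_leV.
move=> D n /andP[HD _] Hn; rewrite leq_min Hn andbT; exact: gamma_in_le.
Qed.

End Helpers.

Theorem theorem2p6 (T : finType) (e : rel T) :
  simple_graph e -> connected_graph e -> 3 <= #|T| ->
  (forall v : T, (exists D : {set T}, is_gamma_set e D /\ v \in D) ->
     gamma e <= gamma_del e v) ->
  gamma e = gamma_cer e.
Proof.
move=> [esym eirr] conn T3 Hyp.
apply/eqP; rewrite eqn_leq gamma_le_cer /=.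
have [D0 [HD0 cD0]] := gamma_attained e [set: T].
have G0 : is_gamma_set e D0 by rewrite /is_gamma_set HD0 cD0 /gamma eqxx.
pose B (D : {set T}) := [set y in D | #|nbhd_in e [set: T] y :\: D| == 1].
case: (arg_minnP (fun D => #|B D|) G0) => D GD Dmin.
have /andP[DD /eqP cD] := GD.
suff Hc : certified_dominating_in e [set: T] D.
  by rewrite -cD; exact: (@bigmin_le _ #|[set: T]| (certified_dominating_in e [set: T]) (fun D => #|D|) D Hc).
rewrite /certified_dominating_in DD /=; apply/forall_inP => x xD.
set N := nbhd_in e [set: T] x :\: D.
have [/cards1P [u Nu]|N1] := boolP (#|N| == 1); last first.
  by move: N1; case: #|N| => [|[|n]].
exfalso.
have uN : u \in N by rewrite Nu set11.
move: (uN); rewrite !inE /= => /andP[uD exu].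
have Nx : forall w, e x w -> w \notin D -> w = u.
  by move=> w exw wD; apply/set1P; rewrite -Nu !inE exw wD.
have xu : x != u by apply/eqP => xu; move: uD; rewrite -xu xD.
move/andP: (DD) => [_ /forall_inP Hdom].
have key : forall w, w \notin D -> w != u -> exists2 y, y \in D :\ x & e w y.
  move=> w wD wu; have /exists_inP [y yD ewy] : [exists y in D, e w y].
    by apply: Hdom; rewrite !inE wD.
  exists y => //; rewrite !inE yD andbT; apply/eqP => yx.
  by move: wu; rewrite (Nx w) ?eqxx //; rewrite -yx esym.
have Hlt : #|D :\ x| < gamma e by rewrite -cD (cardsD1 x D) xD.
have priv : forall y, y \in D -> e u y -> y = x.
  move=> y yD euy; apply/eqP; apply/negP => /negP yx.
  have : gamma e <= gamma_del e x by apply: Hyp; exists D.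
  rewrite leqNgt => /negP; apply; apply: leq_ltn_trans Hlt.
  apply: gamma_in_le; rewrite /dominating_in; apply/andP; split.
    by apply/subsetP => z; rewrite !inE => /andP[].
  apply/forall_inP => w; rewrite !inE => /andP[wD wx].
  rewrite wx /= in wD.
  case: (eqVneq w u) => [->|wu].
    by apply/exists_inP; exists y => //; rewrite !inE yx.
  by have [y' y'D ewy'] := key w wD wu; apply/exists_inP; exists y'.
pose D' := u |: (D :\ x).
have GD' : is_gamma_set e D'.
  rewrite /is_gamma_set -cD /D' cardsU1 (cardsD1 x D) xD !inE (negbTE uD) andbF eqxx andbT.
  rewrite /dominating_in subsetT /=; apply/forall_inP => w; rewrite !inE.
  case: (eqVneq w u) => //= wu.
  case: (eqVneq w x) => [wx|wx] /= wD.
    by apply/exists_inP; exists u; rewrite ?inE ?eqxx // wx.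
  have [y yD ewy] := key w (proj1 (andP wD)) wu; apply/exists_inP; exists y => //.
  by rewrite inE yD orbT.
have noD : forall y, y \in D -> ~~ e x y.
  move=> y yD; apply/negP => exy.
  have : gamma e <= gamma_del e u by apply: Hyp; exists D'; rewrite !inE eqxx.
  rewrite leqNgt => /negP; apply; apply: leq_ltn_trans Hlt.
  apply: gamma_in_le; rewrite /dominating_in; apply/andP; split.
    apply/subsetP => z; rewrite !inE => /andP[_ zD].
    by apply/eqP => zu; move: uD; rewrite -zu zD.
  apply/forall_inP => w; rewrite !inE => /andP[wD wu].
  case: (eqVneq w x) => [wx|wx] /=.
    apply/exists_inP; exists y; last by rewrite wx.
    rewrite !inE yD andbT; apply/eqP => yx; move: exy; by rewrite yx eirr.
  rewrite wx /= in wD.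
  by have [y' y'D ewy'] := key w wD wu; apply/exists_inP; exists y'.
have [z zx euz] : exists2 z, z != x & e u z.
  case: (pickP (fun z => (z != x) && e u z)) => [z /andP[zx euz]|none].
    by exists z.
  exfalso.
  pose A := [set x; u].
  have clos : forall a b, a \in A -> e a b -> b \in A.
    move=> a b; rewrite !inE => /orP[/eqP->|/eqP->] eab.
      apply/orP; right; apply/eqP; apply: Nx => //; apply/negP => bD.
      by move: (noD b bD); rewrite eab.
    by move: (none b); rewrite eab andbT => /negbFE/eqP ->; rewrite eqxx.
  have [z zA] : exists z, z \notin A.
    case: (pickP (fun z => z \notin A)) => [z Hz|H]; first by exists z.
    have h : #|T| <= #|A|.
      rewrite -cardsT; apply: subset_leq_card; apply/subsetP => z _.
      by move: (H z) => /negbFE.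
    move: (leq_trans T3 h); rewrite cards2; by case: (x != u).
  have gen : forall p a, a \in A -> path e a p -> last a p \in A.
    elim=> [|b p IH] a aA //= /andP[eab pth'].
    by apply: IH pth'; exact: clos aA eab.
  move: (conn x z) => /connectP [p pth zl].
  by move: zA; rewrite zl (gen p x _ pth) // !inE eqxx.
have zu : z != u by apply/eqP => zu; move: euz; rewrite zu eirr.
have zD : z \notin D by apply/negP => zD; move: zx; rewrite (priv z zD euz) eqxx.
have BD' : B D' \subset B D :\ x.
  apply/subsetP => y; rewrite /B in_set => /andP[yD' c1].
  move: yD'; rewrite /D' !inE => /orP[/eqP yu|/andP[yx yD]].
    have : [set x; z] \subset nbhd_in e [set: T] y :\: D'.
      apply/subsetP => w; rewrite !inE => /orP[/eqP->|/eqP->]; rewrite yu.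
        by rewrite eqxx (negbTE xu) /= (esym u x) exu.
      by rewrite (negbTE zu) (negbTE zD) andbF /= euz.
    move/subset_leq_card; rewrite cards2 (eqP c1) eq_sym zx //.
  rewrite yx /=.
  rewrite yD /=; suff -> : nbhd_in e [set: T] y :\: D = nbhd_in e [set: T] y :\: D' by [].
  apply/setP => w; rewrite !inE /=.
  case eyw: (e y w); rewrite ?andbF // !andbT.
  have wu : w != u.
    apply/eqP => wu; move: yx; rewrite wu in eyw.
    by rewrite (priv y yD) ?eqxx // (esym u y).
  have wx : w != x.
    apply/eqP => wx; move: (noD y yD); rewrite wx in eyw.
    by rewrite (esym x y) eyw.
  by rewrite (negbTE wu) wx.
have xB : x \in B D by rewrite /B in_set xD /= -/N Nu cards1.
have h1 : #|B D'| < #|B D|.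
  apply: (leq_ltn_trans (subset_leq_card BD')).
  by rewrite (cardsD1 x (B D)) xB.
by move: (Dmin D' GD'); rewrite leqNgt h1.
Qed.
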